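(* Let $n$ be an odd positive integer. There exists an ordering $w_0, w_1, \ldots, w_{2^n-3}$ of the set $\mathbb{Z}_2^n\setminus\{00\cdots0,\,11\cdots1\}$ in which every two consecutive words differ in exactly one bit position, and such that for every word $w$ in the set, the positions of $w$ and of its complement $\overline{w}$ in the ordering differ by exactly $2^{n-1}-1$.
   Context: For a binary word $w\in\mathbb{Z}_2^n$, its complement $\overline{w}$ is obtained by changing every $0$ to $1$ and every $1$ to $0$ (equivalently $\overline{w}=w+11\cdots1$). *)

(* Defs.v *)
From mathcomp Require Import all_boot.
Set Implicit Arguments. Unset Strict Implicit. Unset Printing Implicit Defensive.

Definition word (n : nat) := {ffun 'I_n -> bool}.

Definition compl n (w : word n) : word n := [ffun i => ~~ w i].

Definition zeros n : word n := [ffun => false].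
Definition ones n : word n := [ffun => true].

Definition hdist n (u v : word n) : nat := #|[pred i | u i != v i]|.

(* Main.v *)
Require Import Defs.
From mathcomp Require Import all_boot zify.
Set Implicit Arguments. Unset Strict Implicit. Unset Printing Implicit Defensive.

Fixpoint hd (u v : seq bool) : nat :=
  if u is a :: u' then (if v is b :: v' then (a != b) + hd u' v' else 0) else 0.
Definition adj (u v : seq bool) := (size u == size v) && (hd u v == 1).

Lemma hdxx u : hd u u = 0.
Proof. by elim: u => //= a u ->; rewrite eqxx. Qed.

Lemma hdC u v : hd u v = hd v u.
Proof. by elim: u v => [|a u IH] [|b v] //=; rewrite IH eq_sym. Qed.

Lemma adjC u v : adj u v = adj v u.
Proof. by rewrite /adj hdC eq_sym. Qed.

Lemma hd_cat x y s t : size x = size y -> hd (x ++ s) (y ++ t) = hd x y + hd s t.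
Proof.
elim: x y => [|a x IH] [|b y] //= [] /IH ->; by rewrite addnA.
Qed.

Lemma adj_cons b x y : adj (b :: x) (b :: y) = adj x y.
Proof. by rewrite /adj /= eqSS eqxx. Qed.

Lemma adj_flip b x : adj (b :: x) (~~ b :: x).
Proof. by case: b; rewrite /adj /= hdxx eqxx. Qed.

Lemma adj_cats x y s : adj (x ++ s) (y ++ s) = adj x y.
Proof.
rewrite /adj !size_cat eqn_add2r; case: eqP => //= /hd_cat ->.
by rewrite hdxx addn0.
Qed.

Lemma adj_catl s x y : adj (s ++ x) (s ++ y) = adj x y.
Proof. by elim: s => //= b s <-; rewrite adj_cons. Qed.

Lemma pathmap f x s : (forall x y, adj (f x) (f y) = adj x y) ->
  path adj (f x) (map f s) = path adj x s.
Proof. by move=> H; elim: s x => //= y s IH x; rewrite H IH. Qed.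

Lemma hd_count u v : size u = size v ->
  hd u v = count (fun i => nth false u i != nth false v i) (iota 0 (size u)).
Proof.
elim: u v => [|a u IH] [|b v] //= [] /IH ->.
by rewrite -add1n iotaDl count_map.
Qed.

Fixpoint ham (u : seq bool) : seq (seq bool) :=
  if u is b :: u' then map (cons b) (ham u') ++ map (cons (~~ b)) (rev (ham u'))
  else [:: [::]].

Definition flip0 (u : seq bool) := if u is b :: u' then ~~ b :: u' else [::].

Lemma ham_head u : ham u = u :: behead (ham u).
Proof. by elim: u => //= b u IH; rewrite IH. Qed.

Lemma size_ham u : size (ham u) = 2 ^ size u.
Proof. by elim: u => //= b u IH; rewrite size_cat !size_map size_rev IH expnS mul2n addnn. Qed.

Lemma mem_map_cons (b a : bool) (l : seq bool) (X : seq (seq bool)) : (a :: l \in map (cons b) X) = (a == b) && (l \in X).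
Proof.
apply/mapP/andP => [[y yX [-> ->]]|[/eqP -> lX]]; first by rewrite eqxx.
by exists l.
Qed.


Lemma mem_ham u l : (l \in ham u) = (size l == size u).
Proof.
elim: u l => [|b u IH] [|a l] /=; rewrite ?inE //.
- by apply/negP; rewrite mem_cat => /orP [] /mapP [y _].
rewrite mem_cat !mem_map_cons mem_rev IH eqSS.
by case: a; case: b; rewrite /= ?andbF ?orbF.
Qed.

Lemma uniq_ham u : uniq (ham u).
Proof.
elim: u => //= b u IH.
rewrite cat_uniq !map_inj_uniq ?rev_uniq ?IH ?andbT /=; try by move=> x y [].
apply/hasPn => x /mapP [y _ ->]; rewrite mem_map_cons.
by case: b.
Qed.

Lemma path_ham u : path adj u (behead (ham u)).
Proof.
elim: u => //= b u IH.
rewrite ham_head /= cat_path (pathmap _ _ (adj_cons b)) IH /=.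
rewrite last_map (lastI u (behead (ham u))) rev_rcons /=.
rewrite adj_flip (pathmap _ _ (adj_cons _)) /=.
have := rev_path adj u (behead (ham u)).
move=> ->.
by rewrite (eq_path (e' := adj)) // => x y; rewrite adjC.
Qed.

Lemma last_ham u : u != [::] -> last u (behead (ham u)) = flip0 u.
Proof.
case: u => // b u _ /=.
rewrite ham_head /= last_cat /= (lastI u (behead (ham u))) rev_rcons /=.
rewrite last_map; congr (_ :: _).
set t := behead (ham u).
have -> : last (last u t) (rev (belast u t)) = last u (rev (u :: t)) by rewrite (lastI u t) rev_rcons.
by rewrite rev_cons last_rcons.
Qed.

Lemma mem_cats1 (a b : bool) x (X : seq (seq bool)) :
  (x ++ [:: a] \in map (cat^~ [:: b]) X) = (a == b) && (x \in X).
Proof.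
apply/mapP/andP => [[y yX]|[/eqP -> xX]]; last by exists x.
rewrite !cats1 => /rcons_inj [-> ->]; by rewrite eqxx.
Qed.

Lemma eq_nseqS (z : seq bool) (q : bool) k (b : bool) : size z = k ->
  (z ++ [:: q] == nseq k.+1 b) = (z == nseq k b) && (q == b).
Proof.
move=> sz; rewrite -addn1 nseqD eqseq_cat ?size_nseq //=.
by rewrite eqseq_cons andbT.
Qed.

Lemma size_flip0 u : size (flip0 u) = size u.
Proof. by case: u. Qed.

Lemma flip0K u : flip0 (flip0 u) = u.
Proof. by case: u => //= b u; rewrite negbK. Qed.

Lemma uniq_cats1 b (X : seq (seq bool)) : uniq (map (cat^~ [:: b]) X) = uniq X.
Proof. by apply: map_inj_uniq => x y; rewrite !cats1 => /rcons_inj []. Qed.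

Lemma all_cats1 b k (X : seq (seq bool)) : all (fun l => size l == k) X ->
  all (fun l => size l == k.+1) (map (cat^~ [:: b]) X).
Proof.
move=> /allP H; apply/allP => x /mapP [y yX ->].
by rewrite size_cat (eqP (H y yX)) addn1.
Qed.

Lemma path_cats1 b x s : path adj (x ++ [:: b]) (map (cat^~ [:: b]) s) = path adj x s.
Proof. by apply: pathmap => ? ?; rewrite adj_cats. Qed.

Lemma last_cats1 b x (s : seq (seq bool)) :
  last (x ++ [:: b]) (map (cat^~ [:: b]) s) = last x s ++ [:: b].
Proof. by elim: s x => //= y s IH x; rewrite IH. Qed.

Lemma pathC (e : rel (seq bool)) x y s : path e x (y :: s) = e x y && path e y s.
Proof. by []. Qed.
Lemma adj_ft : adj [:: false] [:: true]. Proof. by []. Qed.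

Definition good m (P : seq (seq bool)) :=
  [/\ uniq P, all (fun l => size l == m) P,
      forall l, size l = m -> (l \in P) = (l != nseq m false),
      size P = (2 ^ m).-1
    & exists v r, [/\ P = v :: r, path adj v r & last v r = map negb v]].

Definition dbl (Q : seq (seq bool)) (w : seq bool) :=
  map (cat^~ [:: false]) Q ++ map (cat^~ [:: true]) (ham w).

Lemma good_step m P : 0 < m -> good m P -> good m.+2 (
  let v' := last [::] P in
  dbl (dbl P v') (flip0 v' ++ [:: true])).
Proof.
move=> m0 [uP szP memP sP [v [r [Pe pP lP]]]].
have lastPe : last [::] P = map negb v by rewrite Pe.
rewrite /= lastPe; set v' := map negb v.
have vP : v \in P by rewrite Pe mem_head.
have sv : size v = m by apply/eqP; apply: (allP szP).
have sv' : size v' = m by rewrite size_map.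
have v'0 : v' != [::] by rewrite -size_eq0 sv' -lt0n.
set w := flip0 v' ++ [:: true].
have sw : size w = m.+1 by rewrite size_cat size_flip0 sv' addn1.
split.
- rewrite /dbl cat_uniq !uniq_cats1 cat_uniq !uniq_cats1 !uniq_ham uP /= !andbT.
  apply/andP; split.
    apply/hasPn => x /mapP [y _ ->]; rewrite mem_cats1 //.
  apply/hasPn => x /mapP [y _ ->]; by rewrite mem_cats1.
- rewrite /dbl all_cat; apply/andP; split; apply: all_cats1.
    rewrite all_cat; apply/andP; split; apply: all_cats1 => //.
    by apply/allP => x; rewrite mem_ham sv'.
  by apply/allP => x; rewrite mem_ham sw.
- case/lastP => [|z q] //; rewrite size_rcons => -[].
  case/lastP: z => [|y p] //; rewrite size_rcons => -[] sy.
  rewrite -!cats1 /dbl mem_cat !mem_cats1 mem_cat !mem_cats1 !mem_ham.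
  rewrite eq_nseqS ?size_cat ?sy ?addn1 // eq_nseqS // memP // size_flip0 sv' eqxx.
  by destruct p, q; rewrite /= ?andbF ?andbT ?orbF ?eqxx.
- rewrite /dbl !size_cat !size_map !size_ham size_cat !size_map size_ham sP sw sv' !expnS.
  have := expn_gt0 2 m; lia.
have flip0_cat : forall u s, u != [::] -> flip0 (u ++ s) = flip0 u ++ s by case.
exists ((v ++ [:: false]) ++ [:: false]).
exists (map (cat^~ [:: false]) (map (cat^~ [:: false]) r ++ map (cat^~ [:: true]) (ham v'))
   ++ map (cat^~ [:: true]) (ham w)).
split; first by rewrite Pe.
- rewrite cat_path path_cats1 cat_path path_cats1 pP andTb.
  rewrite last_cats1 lP -/v' (ham_head v') [map _ (_ :: _)]/=.
  rewrite pathC adj_catl adj_ft path_cats1 path_ham andTb.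
  rewrite last_cats1 last_cat last_cats1 /= last_cats1 last_ham // -/w.
  rewrite (ham_head w) [map _ (_ :: _)]/= pathC adj_catl adj_ft path_cats1 path_ham //.
rewrite last_cat (ham_head w) /= last_cats1 last_ham; last by rewrite -size_eq0 sw.
rewrite flip0_cat ?flip0K; last by rewrite -size_eq0 size_flip0 sv' -lt0n.
by rewrite !map_cat.
Qed.

Lemma good2 : good 2 [:: [:: false; true]; [:: true; true]; [:: true; false]].
Proof.
split => //.
- by move=> [|a [|b [|c l]]] //= _; case: a; case: b.
by exists [:: false; true], [:: [:: true; true]; [:: true; false]].
Qed.

Lemma exists_good k : exists P, good k.*2.+2 P.
Proof.
elim: k => [|k [P gP]]; first by exists [:: [:: false; true]; [:: true; true]; [:: true; false]]; exact: good2.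
by eexists; rewrite doubleS; apply: good_step gP.
Qed.

Lemma cardP n (P : nat -> bool) : #|[pred i : 'I_n | P i]| = count P (iota 0 n).
Proof.
rewrite cardE /enum_mem size_filter -enumT -val_enum_ord count_map.
by apply: eq_count.
Qed.

Definition wo n (l : seq bool) : word n := [ffun i : 'I_n => nth false l i].
Definition lo n (w : word n) : seq bool := map w (enum 'I_n).

Lemma size_lo n (w : word n) : size (lo w) = n.
Proof. by rewrite size_map size_enum_ord. Qed.

Lemma loK n (w : word n) : wo n (lo w) = w.
Proof.
apply/ffunP => i; rewrite ffunE (nth_map i) ?size_enum_ord //.
by rewrite nth_ord_enum.
Qed.

Lemma eq_wo n x y : size x = n -> size y = n -> (wo n x == wo n y) = (x == y).
Proof.
move=> sx sy; apply/eqP/eqP => [E|-> //].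
apply: (@eq_from_nth _ false); first by rewrite sx sy.
move=> i; rewrite sx => lt; have := congr1 (fun f : word n => f (Ordinal lt)) E.
by rewrite !ffunE.
Qed.

Lemma wo_inj n x y : size x = n -> size y = n -> wo n x = wo n y -> x = y.
Proof. by move=> sx sy /eqP; rewrite eq_wo // => /eqP. Qed.

Lemma wo_hdist n x y : size x = n -> size y = n -> hdist (wo n x) (wo n y) = hd x y.
Proof.
move=> sx sy; rewrite hd_count ?sx ?sy // -cardP /hdist.
by apply: eq_card => i; rewrite !inE !ffunE.
Qed.

Lemma wo_compl n x : size x = n -> compl (wo n x) = wo n (map negb x).
Proof.
move=> sx; apply/ffunP => i; rewrite !ffunE (nth_map false) //.
by rewrite sx.
Qed.

Lemma wo_nseq n b : wo n (nseq n b) = [ffun => b].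
Proof. by apply/ffunP => i; rewrite !ffunE nth_nseq ltn_ord. Qed.

Lemma wo_nil n : wo n [::] = zeros n.
Proof. by apply/ffunP => i; rewrite !ffunE nth_nil. Qed.

Lemma index_wo n (S : seq (seq bool)) x : all (fun l => size l == n) S -> size x = n ->
  index (wo n x) (map (wo n) S) = index x S.
Proof.
move=> aS sx; elim: S aS => //= y S IH /andP [/eqP sy aS].
by rewrite eq_sym eq_wo // eq_sym IH.
Qed.

Lemma mem_wo n (S : seq (seq bool)) x : all (fun l => size l == n) S -> size x = n ->
  (wo n x \in map (wo n) S) = (x \in S).
Proof.
move=> aS sx; elim: S aS => //= y S IH /andP [/eqP sy aS].
by rewrite !inE eq_wo // IH.
Qed.

Lemma adj_negb x y : adj (map negb x) (map negb y) = adj x y.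
Proof.
rewrite /adj !size_map; congr (_ && (_ == 1)).
by elim: x y => [|a x IH] [|b y] //=; rewrite IH; case: a; case: b.
Qed.

Lemma transfer m P : good m P ->
  exists s : seq (word m.+1),
    [/\ uniq s,
        (forall w : word m.+1, (w \in s) = (w != zeros m.+1) && (w != ones m.+1)),
        (forall i, i.+1 < size s -> hdist (nth (zeros m.+1) s i) (nth (zeros m.+1) s i.+1) = 1)
      & (forall w, w \in s ->
           (index w s + (2 ^ m.+1.-1).-1 = index (compl w) s) \/
           (index (compl w) s + (2 ^ m.+1.-1).-1 = index w s))].
Proof.
move=> [uP szP memP sP [v [r [Pe pP lP]]]].
set n := m.+1.
have negI : injective (map negb) by apply: (can_inj (mapK negbK)).
have consI : forall b : bool, injective (cons b) by move=> b x y [].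
set S := map (cons false) P ++ map (cons true) (map (map negb) P).
have szS : all (fun l => size l == n) S.
  rewrite all_cat; apply/andP; split; apply/allP => x /mapP [y yP ->] /=.
    by rewrite eqSS; apply: (allP szP).
  by move: yP => /mapP [z zP ->]; rewrite size_map eqSS; apply: (allP szP).
have sizeS : forall x, x \in S -> size x = n by move=> x /(allP szS) /eqP.
have memS : forall l, size l = n -> (l \in S) = (l != nseq n false) && (l != nseq n true).
  case=> [|b l] // [] sl; rewrite mem_cat.
  case: b; rewrite !mem_map_cons /=.
    have -> : (l \in map (map negb) P) = (map negb l \in P) by rewrite -{1}(mapK negbK l) mem_map.
    rewrite memP ?size_map // eqseq_cons eqxx /=.
    apply/idP/idP => /eqP H; apply/eqP => E; apply: H.
      by rewrite E map_nseq.
    by rewrite -(mapK negbK l) E map_nseq.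
  by rewrite memP // eqseq_cons eqxx orbF andbT.
have pS : path adj (false :: v) (behead S).
  rewrite /S Pe /= cat_path (pathmap _ _ (adj_cons false)) pP /=.
  rewrite last_map lP adj_flip /= (pathmap _ _ (adj_cons true)).
  by rewrite (pathmap _ _ adj_negb).
have Se : S = (false :: v) :: behead S by rewrite /S Pe.
exists (map (wo n) S); split.
- rewrite map_inj_in_uniq.
    rewrite cat_uniq !map_inj_uniq // uP /= andbT.
    by apply/hasPn => x /mapP [y _ ->]; rewrite mem_map_cons.
  by move=> x y /sizeS sx /sizeS sy; apply: wo_inj.
- move=> w; rewrite -(loK w) mem_wo // ?size_lo // memS ?size_lo //.
  by rewrite /zeros /ones -!wo_nseq !eq_wo ?size_lo ?size_nseq.
- move=> i; rewrite size_map => lt.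
  rewrite -wo_nil !(nth_map [::]) // ?(ltnW lt) //.
  have hS : forall j, j < size S -> size (nth [::] S j) = n.
    by move=> j lj; apply/sizeS/mem_nth.
  rewrite wo_hdist ?hS // ?(ltnW lt) //.
  have lt' : i < size (behead S) by rewrite size_behead; lia.
  move: pS => /(pathP [::]) /(_ i lt') /andP [_ /eqP].
  by rewrite Se.
move=> w /mapP [x xS ->].
rewrite wo_compl ?sizeS // !index_wo ?size_map ?sizeS //.
have -> : (2 ^ n.-1).-1 = size P by rewrite sP.
move: xS; rewrite mem_cat => /orP [] /mapP [p pP1 ->].
  left; rewrite /= /S !index_cat mem_map // pP1 mem_map_cons /=.
  rewrite !(index_map (consI _)) size_map (index_map negI).
  by rewrite addnC.
move: pP1 => /mapP [q qP ->].
right; rewrite /= (mapK negbK) /S !index_cat (mem_map (consI false)) qP mem_map_cons /=.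
rewrite !(index_map (consI _)) size_map (index_map negI).
by rewrite addnC.
Qed.
Unset Implicit Arguments.

Theorem theorem1 (n : nat) (hn : odd n) :
  exists s : seq (word n),
    [/\ uniq s,
        (forall w : word n, (w \in s) = (w != zeros n) && (w != ones n)),
        (forall i, i.+1 < size s -> hdist (nth (zeros n) s i) (nth (zeros n) s i.+1) = 1)
      & (forall w, w \in s ->
           (index w s + (2 ^ n.-1).-1 = index (compl w) s) \/
           (index (compl w) s + (2 ^ n.-1).-1 = index w s))].
Proof.
case: n hn => [|n'] //= hn.
have e : n' = (n'./2).*2 by rewrite -{1}(odd_double_half n') (negbTE hn).
case E: (n'./2) e => [|k] e.
  rewrite e; exists [::]; split => // w.
  rewrite in_nil; apply/esym/negbTE; rewrite negb_and !negbK.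
  have [E1|E1] := boolP (w ord0); [apply/orP; right | apply/orP; left];
    apply/eqP/ffunP => i; rewrite ord1 !ffunE //.
  exact: negbTE.
have [P gP] := exists_good k.
rewrite e doubleS. exact: (transfer gP).
Qed.
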